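(* Let $G$ be a finite simple graph on vertex set $[n]$, $S=\mathbb{K}[x_1,\dots,x_n]$, $\mathcal{T}$ the set of triangles of $G$ (3-element vertex sets inducing $K_3$), and $M=\mathcal{F}(G)^{(2)}/\mathcal{F}(G)^2$ as a graded $\mathbb{K}$-vector space. Then for every integer $z$, $$H_M(z)=\sum_{T\in\mathcal{T}}H_{S_T/I_T}(z-3),$$ where $S_T=\mathbb{K}[x_v: v\in [n]\setminus N[T]]$, $I_T=\mathcal{F}(G-N[T])\subset S_T$, and $H_N(i)=\dim_{\mathbb{K}}N_i$ denotes the Hilbert function.
   Context: $\mathcal{F}(G)=(x_ix_j:\{i,j\}\in E(G))$. For squarefree monomial $I$, $I^{(2)}=\bigcap_{P\in\mathrm{Ass}(I)}P^2$. For $v$ a vertex, $N[v]=\{v\}\cup\{u:\{u,v\}\in E(G)\}$ is the closed neighborhood, and $N[A]=\bigcup_{v\in A}N[v]$. $G-N[T]$ denotes the induced subgraph of $G$ on the vertex set $[n]\setminus N[T]$. (If $[n]\setminus N[T]=\emptyset$ then $S_T=\mathbb{K}$ and $I_T=0$.) *)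

(* Defs.v *)
From HB Require Import structures.
From mathcomp Require Import all_boot all_order all_algebra.
From mathcomp Require Import mpoly.
From Stdlib Require Import ClassicalEpsilon.
Set Implicit Arguments. Unset Strict Implicit. Unset Printing Implicit Defensive.
Import GRing.Theory.
Local Open Scope ring_scope.

Section Defs.
Variables (K : fieldType) (n : nat).
Local Notation poly := {mpoly K[n]}.

Definition pset := poly -> Prop.

(* Ideal of the (sub)ring R generated by the set Gen (Gen and R inside S):
   finite sums  sum_k c_k * g_k  with c_k in R and g_k in Gen.
   With R = all of S this is the usual ideal (Gen) of S. *)
Definition ideal_gen (R : pset) (Gen : pset) : pset := fun p =>
  exists (cs gs : seq poly), size cs = size gs /\
    (forall c, c \in cs -> R c) /\ (forall g, g \in gs -> Gen g) /\
    p = \sum_(k < size gs) cs`_k * gs`_k.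

Definition whole : pset := fun _ => True.

Definition ideal_sq (J : pset) : pset :=
  ideal_gen whole (fun m => exists a b, J a /\ J b /\ m = a * b).

Definition is_ideal (P : pset) : Prop :=
  P 0 /\ (forall a b, P a -> P b -> P (a + b)) /\ (forall a r, P a -> P (r * a)).

Definition prime_ideal (P : pset) : Prop :=
  is_ideal P /\ ~ P 1 /\ (forall a b, P (a * b) -> P a \/ P b).

Definition Ass (I : pset) : pset -> Prop := fun P =>
  prime_ideal P /\ exists f : poly, forall g, P g <-> I (g * f).

Definition symb2 (I : pset) : pset := fun p =>
  forall P, Ass I P -> ideal_sq P p.

(* homogeneous of (integer) degree z (standard grading deg x_i = 1);
   for z < 0 only the zero polynomial. *)
Definition homog_z (z : int) (p : poly) : Prop :=
  exists d : nat, z = d%:Z /\ p \is d.-homog.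

Definition indep_mod (W : pset) (ps : seq poly) : Prop :=
  forall c : seq K, size c = size ps ->
    W (\sum_(k < size ps) c`_k *: ps`_k) -> forall k, c`_k = 0.

(* dim_K (V_z / W_z) = k, for W <= V graded *)
Definition has_qdim (V W : pset) (z : int) (k : nat) : Prop :=
  (exists ps : seq poly, size ps = k /\
     (forall p, p \in ps -> V p /\ homog_z z p) /\ indep_mod W ps) /\
  (forall ps : seq poly, (forall p, p \in ps -> V p /\ homog_z z p) ->
     indep_mod W ps -> (size ps <= k)%N).

Definition hilb (V W : pset) (z : int) : nat :=
  epsilon (inhabits 0%N) (has_qdim V W z).

Variable e : rel 'I_n.

Definition closed_nbhd (A : {set 'I_n}) : {set 'I_n} :=
  [set u | [exists v in A, (u == v) || e u v]].

Definition is_triangle (T : {set 'I_n}) : bool :=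
  (#|T| == 3)%N && [forall u in T, forall v in T, (u != v) ==> e u v].

Definition edge_gens (A : {set 'I_n}) : pset := fun m =>
  exists i j : 'I_n, [/\ i \in A, j \in A, e i j & m = 'X_i * 'X_j].

Definition edge_ideal : pset := ideal_gen whole (edge_gens setT).

(* S_T = K[x_v : v notin N[T]], realised as the subring of S of polynomials
   involving only the variables outside N[T]. *)
Definition subring_vars (A : {set 'I_n}) : pset := fun p =>
  forall m, m \in msupp p -> forall i, i \notin A -> (m i = 0)%N.

Definition S_T (T : {set 'I_n}) : pset := subring_vars (~: closed_nbhd T).
Definition I_T (T : {set 'I_n}) : pset :=
  ideal_gen (S_T T) (edge_gens (~: closed_nbhd T)).

End Defs.

(* Main.v *)
Require Import Defs.
From HB Require Import structures.
From mathcomp Require Import all_boot all_order all_algebra.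
From mathcomp Require Import mpoly.
From mathcomp Require Import zify ring.
From Stdlib Require Import ClassicalEpsilon Classical.
Set Implicit Arguments. Unset Strict Implicit. Unset Printing Implicit Defensive.
Import GRing.Theory.
Local Open Scope ring_scope.

Section Gen.
Variables (K : fieldType) (n : nat).
Local Notation poly := {mpoly K[n]}.
Implicit Types (p q r : poly) (m : 'X_{1..n}).

Definition mspan (u : 'X_{1..n} -> Prop) : pset K n :=
  fun p => forall m, m \in msupp p -> u m.

Lemma mspan0 u : mspan u 0.
Proof. by move=> m; rewrite msupp0. Qed.

Lemma mspanD u p q : mspan u p -> mspan u q -> mspan u (p + q).
Proof. by move=> hp hq m /msuppD_le; rewrite mem_cat => /orP[/hp|/hq]. Qed.

Lemma mspanZ u c p : mspan u p -> mspan u (c *: p).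
Proof. by move=> hp m /msuppZ_le /hp. Qed.

Lemma mspanN u p : mspan u p -> mspan u (- p).
Proof. by move=> hp; rewrite -scaleN1r; apply: mspanZ. Qed.

Lemma mspanX u m : u m -> mspan u 'X_[m].
Proof. by move=> hm m'; rewrite msuppX inE => /eqP ->. Qed.

Lemma mspan_sum u (I : Type) (r : seq I) (P : pred I) (F : I -> poly) :
  (forall i, P i -> mspan u (F i)) -> mspan u (\sum_(i <- r | P i) F i).
Proof.
move=> h; apply: (big_ind (mspan u)); [exact: mspan0|exact: mspanD|exact: h].
Qed.

Lemma mspanM (u v w : 'X_{1..n} -> Prop) p q :
  mspan u p -> mspan v q ->
  (forall m1 m2, u m1 -> v m2 -> w (m1 + m2)%MM) -> mspan w (p * q).
Proof.
move=> hp hq huv m /msuppM_le /allpairsP [[m1 m2] /= [h1 h2 ->]].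
by apply: huv; [apply: hp | apply: hq].
Qed.

Definition upclosed (u : 'X_{1..n} -> Prop) :=
  forall m1 m2, u m1 -> u (m2 + m1)%MM.

Lemma mspan_mull u r p : upclosed u -> mspan u p -> mspan u (r * p).
Proof.
move=> uc hp; apply: (@mspanM (fun _ => True) u u) => //.
by move=> m1 m2 _; apply: uc.
Qed.

Lemma mcoeff_sumE (I : Type) (r : seq I) (P : pred I) (F : I -> poly) m :
  (\sum_(i <- r | P i) F i)@_m = \sum_(i <- r | P i) (F i)@_m.
Proof.
apply: (big_ind2 (fun a b => a@_m = b)); first by rewrite mcoeff0.
  by move=> a b x y <- <-; rewrite mcoeffD.
by [].
Qed.

Lemma span_closed (P : pset K n) p :
  P 0 -> (forall a b, P a -> P b -> P (a + b)) -> (forall c a, P a -> P (c *: a)) ->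
  (forall m, m \in msupp p -> P 'X_[m]) -> P p.
Proof.
move=> P0 PD PZ hX; rewrite (mpolyE p) big_seq.
by apply: (big_ind P) => // m mP; apply: PZ; apply: hX.
Qed.

Definition proj (u : pred 'X_{1..n}) p :=
  \sum_(m <- msupp p | u m) p@_m *: 'X_[m].

Lemma proj_span (u : pred 'X_{1..n}) p : mspan u (proj u p).
Proof. by apply: mspan_sum => m um; apply: mspanZ; apply: mspanX. Qed.

Lemma proj_split (u : pred 'X_{1..n}) p : p = proj u p + proj (predC u) p.
Proof. by rewrite {1}(mpolyE p) (bigID u) /=. Qed.

Lemma ideal_gen_sub (R Gen Q : pset K n) p :
  Q 0 -> (forall a b, Q a -> Q b -> Q (a + b)) ->
  (forall c g, R c -> Gen g -> Q (c * g)) -> ideal_gen R Gen p -> Q p.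
Proof.
move=> Q0 QD QM [cs [gs [hs [hc [hg ->]]]]].
apply: (big_ind Q) => // k _; apply: QM.
  by apply: hc; apply: mem_nth; rewrite hs.
by apply: hg; apply: mem_nth.
Qed.

Lemma ideal_genE (R Gen : pset K n) p :
  ideal_gen R Gen p <-> exists l : seq (poly * poly),
    (forall x, x \in l -> R x.1 /\ Gen x.2) /\ p = \sum_(x <- l) x.1 * x.2.
Proof.
split.
  move=> [cs [gs [hs [hc [hg ->]]]]]; exists (zip cs gs); split.
    move=> x hx; split.
      by apply: hc; have := map_f fst hx; rewrite -/(unzip1 _) unzip1_zip ?hs.
    by apply: hg; have := map_f snd hx; rewrite -/(unzip2 _) unzip2_zip ?hs.
  rewrite (big_nth (0, 0)) big_mkord size_zip hs minnn.
  by apply: eq_bigr => k _; rewrite nth_zip.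
move=> [l [hl ->]]; exists (unzip1 l), (unzip2 l); split; first by rewrite !size_map.
split; first by move=> c /mapP [x /hl [? _] ->].
split; first by move=> g /mapP [x /hl [_ ?] ->].
rewrite (big_nth (0, 0)) big_mkord size_map; apply: eq_bigr => k _.
by rewrite !(nth_map (0,0)) // ltn_ord.
Qed.

Lemma ideal_genD (R Gen : pset K n) a b :
  ideal_gen R Gen a -> ideal_gen R Gen b -> ideal_gen R Gen (a + b).
Proof.
move=> /ideal_genE [l1 [h1 ->]] /ideal_genE [l2 [h2 ->]]; apply/ideal_genE.
exists (l1 ++ l2); split; last by rewrite big_cat.
by move=> x; rewrite mem_cat => /orP [/h1|/h2].
Qed.

Lemma ideal_gen0 (R Gen : pset K n) : ideal_gen R Gen 0.
Proof. by apply/ideal_genE; exists [::]; rewrite big_nil. Qed.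

Lemma ideal_gen1 (R Gen : pset K n) c g : R c -> Gen g -> ideal_gen R Gen (c * g).
Proof.
move=> hc hg; apply/ideal_genE; exists [:: (c, g)]; rewrite big_seq1; split=> //.
by move=> x; rewrite inE => /eqP ->.
Qed.

Lemma ideal_genM (R Gen : pset K n) r a :
  (forall c, R c -> R (r * c)) -> ideal_gen R Gen a -> ideal_gen R Gen (r * a).
Proof.
move=> hR /ideal_genE [l [hl ->]]; apply/ideal_genE.
exists [seq (r * x.1, x.2) | x <- l]; split.
  by move=> x /mapP [y /hl [h1 h2] ->]; split => //; apply: hR.
by rewrite big_map mulr_sumr; apply: eq_bigr => x _; rewrite mulrA.
Qed.

Lemma ideal_genZ (R Gen : pset K n) c a :
  (forall d, R d -> R (c *: d)) -> ideal_gen R Gen a -> ideal_gen R Gen (c *: a).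
Proof.
move=> hR /ideal_genE [l [hl ->]]; apply/ideal_genE.
exists [seq (c *: x.1, x.2) | x <- l]; split.
  by move=> x /mapP [y /hl [h1 h2] ->]; split => //; apply: hR.
by rewrite big_map scaler_sumr; apply: eq_bigr => x _; rewrite scalerAl.
Qed.

End Gen.

Section Dim.
Variables (K : fieldType) (n : nat).
Local Notation poly := {mpoly K[n]}.
Implicit Types (p q r : poly) (m : 'X_{1..n}).

Definition cnt (u u' : pred 'X_{1..n}) (z : int) : nat :=
  match z with
  | Posz d => #|[pred b : 'X_{1..n < d.+1} | (mdeg b == d) && u b && ~~ u' b]|
  | Negz _ => 0%N
  end.

Lemma has_qdim_uniq (V W : pset K n) z k1 k2 :
  has_qdim V W z k1 -> has_qdim V W z k2 -> k1 = k2.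
Proof.
move=> [[ps1 [s1 [h1 i1]]] u1] [[ps2 [s2 [h2 i2]]] u2].
have := u2 _ h1 i1; have := u1 _ h2 i2; rewrite s1 s2 => a b.
by apply/eqP; rewrite eqn_leq a b.
Qed.

Lemma hilb_eq (V W : pset K n) z k : has_qdim V W z k -> hilb V W z = k.
Proof.
move=> hk; rewrite /hilb.
have := epsilon_spec (inhabits 0%N) (has_qdim V W z) (ex_intro _ k hk).
by move=> h; apply: (has_qdim_uniq h hk).
Qed.

Lemma mspan_and (u v : 'X_{1..n} -> Prop) p :
  mspan u p -> mspan v p -> mspan (fun m => u m /\ v m) p.
Proof. by move=> hu hv m hm; split; [apply: hu | apply: hv]. Qed.

Lemma mspan_impl (u v : 'X_{1..n} -> Prop) p :
  (forall m, u m -> v m) -> mspan u p -> mspan v p.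
Proof. by move=> huv hu m /hu /huv. Qed.

Lemma has_qdim_span (V W : pset K n) (u u' : pred 'X_{1..n}) z :
  (forall p, V p <-> mspan u p) -> (forall p, W p <-> mspan u' p) ->
  has_qdim V W z (cnt u u' z).
Proof.
move=> hV hW; case: z => [d|d]; last first.
  split.
    exists [::]; split => //; split => //; by move=> [|x c] //= _ _ k; rewrite nth_nil.
  by move=> [|p ps] // /(_ p (mem_head _ _)) [_ [d' []]].
set S := [pred b : 'X_{1..n < d.+1} | (mdeg b == d) && u b && ~~ u' b].
rewrite /cnt -/S.
set B := enum S.
have uB : uniq [seq val b | b <- B].
  by rewrite map_inj_uniq ?enum_uniq //; apply: val_inj.
split.
  exists [seq ('X_[val b] : poly) | b <- B]; split; first by rewrite size_map cardE.
  split.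
    move=> p /mapP [b]; rewrite mem_enum => /andP [/andP [/eqP db ub] _] ->.
    split; first by apply/hV; apply: mspanX.
    by exists d; split => //; rewrite dhomogX; exact/eqP.
  move=> c sc /hW hsum i.
  have [hi|hi] := ltnP i (size B); last first.
    by rewrite nth_default // sc size_map.
  set mi := val (nth bm0 B i).
  have coefE : (\sum_(k < size [seq ('X_[val b] : poly) | b <- B])
       c`_k *: [seq ('X_[val b] : poly) | b <- B]`_k)@_mi = c`_i.
    rewrite mcoeff_sumE /= size_map (bigD1 (Ordinal hi)) //= big1 ?addr0.
      by rewrite (nth_map bm0) // mcoeffZ mcoeffX eqxx mulr1.
    move=> j /eqP hj; rewrite (nth_map bm0) // mcoeffZ mcoeffX.
    have -> : (val (nth bm0 B j) == mi) = false.
      rewrite /mi -(nth_map bm0 0%MM val) // -(nth_map bm0 0%MM val hi).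
      rewrite nth_uniq ?size_map ?ltn_ord //; apply/negbTE/eqP => hji; apply: hj; exact: val_inj.
    by rewrite mulr0.
  apply/eqP/negPn/negP => ci.
  have : mi \in msupp (\sum_(k < size [seq ('X_[val b] : poly) | b <- B])
       c`_k *: [seq ('X_[val b] : poly) | b <- B]`_k) by rewrite mcoeff_msupp coefE.
  move/hsum; have : nth bm0 B i \in S by rewrite -mem_enum mem_nth.
  by rewrite inE => /andP [_ /negP].
move=> ps hps hind; rewrite cardE -/B leqNgt; apply/negP => hlt.
set s := size ps.
pose X : s.-tuple 'rV[K]_(size B) :=
  [tuple \row_(j < size B) (ps`_i)@_(val (nth bm0 B j)) | i < s].
have nfree : ~~ free X.
  apply/negP => /eqP hf.
  have := dimvS (subvf <<X>>%VS); rewrite hf dimvf dim_matrix size_tuple mul1r => h.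
  by rewrite ltnNge h in hlt.
have [kf [hk0 [i0 hi0]]] : exists kf : 'I_s -> K,
    \sum_(i < s) kf i *: X`_i = 0 /\ exists i, kf i != 0.
  apply: NNPP => hno; move/negP: nfree; apply; apply/freeP => kf hk i.
  apply: NNPP => hi; apply: hno; exists kf; split => //; exists i; exact/eqP.
pose c := mkseq (fun i => kf (insubd i0 i)) s.
have cE (i : 'I_s) : c`_i = kf i.
  by rewrite nth_mkseq //; congr kf; apply: val_inj; rewrite val_insubd ltn_ord.
have sc : size c = size ps by rewrite size_mkseq.
have := hind c sc; set q := \sum_(k < size ps) _.
have qsp : mspan (fun m => u m /\ mdeg m = d) q.
  apply: mspan_sum => k _; apply: mspanZ.
  have [/hV hu [d' [/eqP]]] := hps _ (mem_nth 0 (ltn_ord k)).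
  rewrite eqz_nat => /eqP <- /dhomogP hd.
  by apply: mspan_and => // m /hd.
move=> /(_ _) hall.
have : W q.
  apply/hW => m mq; apply/negPn/negP => um'.
  have [um dm] := qsp m mq.
  have dlt : (mdeg m < d.+1)%N by rewrite dm.
  pose b : 'X_{1..n < d.+1} := BMultinom dlt.
  have bS : b \in B by rewrite mem_enum inE /= dm eqxx um.
  move: mq; rewrite mcoeff_msupp => /negP; apply.
  have hj : (index b B < size B)%N by rewrite index_mem.
  have := congr1 (fun M : 'rV_(size B) => M 0 (Ordinal hj)) hk0.
  rewrite summxE mxE /= => h0.
  apply/eqP; rewrite -h0 /q mcoeff_sumE; apply: eq_bigr => i _.
  by rewrite mcoeffZ cE !mxE nth_mktuple mxE nth_index.
move/hall => hc; move: hi0; rewrite -cE hc eqxx //.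
Qed.

Lemma hilb_span (V W : pset K n) (u u' : pred 'X_{1..n}) z :
  (forall p, V p <-> mspan u p) -> (forall p, W p <-> mspan u' p) ->
  hilb V W z = cnt u u' z.
Proof. by move=> hV hW; apply: hilb_eq; apply: has_qdim_span. Qed.

End Dim.

Section Graph.
Variables (K : fieldType) (n : nat) (e : rel 'I_n).
Hypotheses (e_sym : ssrbool.symmetric e) (e_irr : irreflexive e).
Local Notation poly := {mpoly K[n]}.
Implicit Types (p q r : poly) (m : 'X_{1..n}).

Definition em (i j : 'I_n) : 'X_{1..n} := (U_(i) + U_(j))%MM.
Definition F1 m := [exists i, exists j, e i j && (em i j <= m)%MM].
Definition F2 m := [exists i, exists j, exists k, exists l,
  [&& e i j, e k l & (em i j + em k l <= m)%MM]].
Definition mT (T : {set 'I_n}) : 'X_{1..n} := [multinom ((i \in T) : nat) | i < n].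
Definition TR m := [exists T : {set 'I_n}, is_triangle e T && (mT T <= m)%MM].
Definition U2 m := F2 m || TR m.
Definition STm (T : {set 'I_n}) m :=
  [forall i, (i \in closed_nbhd e T) ==> (m i == 0%N)].
Definition ITm (T : {set 'I_n}) m := STm T m &&
  [exists i, exists j, [&& i \notin closed_nbhd e T, j \notin closed_nbhd e T,
     e i j & (em i j <= m)%MM]].

Lemma emE i j v : em i j v = ((i == v) + (j == v))%N.
Proof. by rewrite mnmDE !mnm1E. Qed.

Lemma XX i j : ('X_i * 'X_j : poly) = 'X_[em i j].
Proof. by rewrite mpolyXD. Qed.

Lemma Xsplit m m' : (m' <= m)%MM -> ('X_[m] : poly) = 'X_[m - m'] * 'X_[m'].
Proof. by move=> h; rewrite -mpolyXD submK. Qed.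

Lemma le_addl m1 m2 m : (m1 <= m)%MM -> (m1 <= m2 + m)%MM.
Proof. by move=> h; apply: lepm_trans h (lem_addl _ _). Qed.

Lemma le_add m1 m2 m3 m4 : (m1 <= m3)%MM -> (m2 <= m4)%MM -> (m1 + m2 <= m3 + m4)%MM.
Proof.
move=> /mnm_lepP h1 /mnm_lepP h2; apply/mnm_lepP => i.
by rewrite !mnmDE leq_add.
Qed.

Lemma F1_up : upclosed F1.
Proof.
move=> m1 m2 /existsP [i /existsP [j /andP [eij h]]].
by apply/existsP; exists i; apply/existsP; exists j; rewrite eij le_addl.
Qed.

Lemma F2_up : upclosed F2.
Proof.
move=> m1 m2 /existsP [i /existsP [j /existsP [k /existsP [l /and3P [eij ekl h]]]]].
apply/existsP; exists i; apply/existsP; exists j; apply/existsP; exists k.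
by apply/existsP; exists l; rewrite eij ekl le_addl.
Qed.

Definition F := @edge_ideal K n e.

Lemma FE p : F p <-> mspan F1 p.
Proof.
split.
  apply: ideal_gen_sub; [exact: mspan0 | exact: mspanD |].
  move=> c g _ [i [j [_ _ eij ->]]]; rewrite XX.
  apply: mspan_mull; first exact: F1_up.
  by apply: mspanX; apply/existsP; exists i; apply/existsP; exists j; rewrite eij lepm_refl.
move=> hp; apply: span_closed.
- exact: ideal_gen0.
- exact: ideal_genD.
- by move=> c a; apply: ideal_genZ.
move=> m /hp /existsP [i /existsP [j /andP [eij h]]].
rewrite (Xsplit h) -XX; apply: ideal_gen1 => //.
by exists i, j; rewrite !inE.
Qed.

Lemma XinF i j : e i j -> F ('X_[em i j]).
Proof.
move=> eij; rewrite -XX -[_ * _]mul1r; apply: ideal_gen1 => //.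
by exists i, j; rewrite !inE.
Qed.

Lemma F2E p : ideal_sq F p <-> mspan F2 p.
Proof.
split.
  apply: ideal_gen_sub; [exact: mspan0 | exact: mspanD |].
  move=> c g _ [a [b [/FE ha [/FE hb ->]]]].
  apply: mspan_mull; first exact: F2_up.
  apply: mspanM ha hb _ => m1 m2.
  move=> /existsP [i /existsP [j /andP [eij h1]]].
  move=> /existsP [k /existsP [l /andP [ekl h2]]].
  apply/existsP; exists i; apply/existsP; exists j; apply/existsP; exists k.
  by apply/existsP; exists l; rewrite eij ekl le_add.
move=> hp; apply: span_closed.
- exact: ideal_gen0.
- exact: ideal_genD.
- by move=> c a; apply: ideal_genZ.
move=> m /hp /existsP [i /existsP [j /existsP [k /existsP [l /and3P [eij ekl h]]]]].
rewrite (Xsplit h) mpolyXD; apply: ideal_gen1 => //.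
by exists 'X_[em i j], 'X_[em k l]; split; [apply: XinF | split; [apply: XinF|]].
Qed.

Lemma STE T p : S_T e T p <-> mspan (STm T) p.
Proof.
split.
  move=> h m hm; apply/forallP => i; apply/implyP => iN.
  by apply/eqP; apply: (h m hm); rewrite inE iN.
move=> h m hm i; rewrite inE negbK => iN.
by have /forallP /(_ i) /implyP /(_ iN) /eqP := h m hm.
Qed.

Lemma ITE T p : I_T e T p <-> mspan (ITm T) p.
Proof.
split.
  apply: ideal_gen_sub; [exact: mspan0 | exact: mspanD |].
  move=> c g /STE hc [i [j [iN jN eij ->]]]; rewrite XX.
  rewrite inE in iN; rewrite inE in jN.
  apply: (mspanM hc (mspanX (u := fun m => m = em i j) erefl)) => m1 _ h1 ->.
  apply/andP; split.
    apply/forallP => v; apply/implyP => vN; rewrite mnmDE emE.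
    have /forallP /(_ v) /implyP /(_ vN) /eqP -> := h1.
    have /negbTE -> : i != v by apply: contraNneq iN => ->.
    by have /negbTE -> : j != v by apply: contraNneq jN => ->.
  apply/existsP; exists i; apply/existsP; exists j; rewrite iN jN eij.
  exact: lem_addl.
move=> hp; apply: span_closed.
- exact: ideal_gen0.
- exact: ideal_genD.
- by move=> c a; apply: ideal_genZ => d /STE hd; apply/STE; apply: mspanZ.
move=> m /hp /andP [hS /existsP [i /existsP [j /and4P [iN jN eij h]]]].
rewrite (Xsplit h) -XX; apply: ideal_gen1.
  apply/STE; apply: mspanX; apply/forallP => v; apply/implyP => vN.
  rewrite mnmBE; have /forallP /(_ v) /implyP /(_ vN) /eqP -> := hS.
  by [].
by exists i, j; rewrite !in_setC iN jN.
Qed.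

End Graph.

Ltac le_tac := apply/mnm_lepP => ?; rewrite ?mnmDE ?emE ?mnm1E;
  repeat (case: eqP => [?|?]; subst => /=); try congruence; lia.

Section Comb.
Variables (n : nat) (e : rel 'I_n).
Hypotheses (e_sym : ssrbool.symmetric e) (e_irr : irreflexive e).
Implicit Types (m : 'X_{1..n}).

Definition degC (C : {set 'I_n}) m := (\sum_(i in C) m i)%N.
Definition indep (I : {set 'I_n}) := [forall i in I, forall j in I, ~~ e i j].

Lemma ne_e x y : e x y -> x <> y.
Proof. by move=> exy exy'; subst; rewrite e_irr in exy. Qed.

Lemma F2i m (i j k l : 'I_n) : ~~ F2 e m -> e i j -> e k l ->
  (em i j + em k l <= m)%MM -> False.
Proof.
move=> nF2 eij ekl h; move/negP: nF2; apply.
apply/existsP; exists i; apply/existsP; exists j; apply/existsP; exists k.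
by apply/existsP; exists l; rewrite eij ekl h.
Qed.

Lemma comb m : ~~ F2 e m -> (forall I, indep I -> (1 < degC (~: I) m)%N) -> TR e m.
Proof.
move=> nF2 hI.
have [a [b [eab ma mb]]] : exists a b, [/\ e a b, (0 < m a)%N & (0 < m b)%N].
  apply: NNPP => hno.
  pose A := [set i | (0 < m i)%N].
  have : indep A.
    apply/forallP => x; apply/implyP => xA; apply/forallP => y; apply/implyP => yA.
    apply/negP => exy; apply: hno; exists x, y; rewrite !inE in xA yA; by split.
  move/hI; rewrite /degC big1 // => i; rewrite in_setC inE -leqNgt leqn0.
  by move/eqP.
have nab := ne_e eab.
case: (boolP [exists c, [&& e a c, e b c & (0 < m c)%N]]) =>
    [/existsP [c /and3P [eac ebc mc]] | nc].
  have nac := ne_e eac; have nbc := ne_e ebc.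
  apply/existsP; exists [set a; b; c]; apply/andP; split.
    apply/andP; split.
      have -> : [set a; b; c] = a |: (b |: [set c]) by apply/setP => x; rewrite !inE ?orbA.
      rewrite !cardsU1 cards1 !inE.
      by move/eqP/negbTE: nab => ->; move/eqP/negbTE: nac => ->; move/eqP/negbTE: nbc => ->.
    apply/forallP => x; apply/implyP; rewrite !inE => hx.
    apply/forallP => y; apply/implyP; rewrite !inE => hy; apply/implyP => hxy.
    move: hx hy => /orP [/orP [] | ] /eqP hx /orP [/orP [] | ] /eqP hy; subst;
      rewrite ?eqxx // in hxy; by rewrite ?eab ?eac ?ebc // e_sym ?eab ?eac ?ebc.
  apply/mnm_lepP => v; rewrite mnmE !inE.
  by case: (boolP (_ || _)) => //= /orP [/orP [] | ] /eqP ->.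
have key (x y : 'I_n) : e x y -> (0 < m x)%N -> (0 < m y)%N ->
    ~~ [exists d, [&& (0 < m d)%N, d != x & e y d]] -> (1 < m x)%N.
  move=> exy mx my nd.
  pose I := [set i | (0 < m i)%N] :\ x.
  have : indep I.
    apply/forallP => u; apply/implyP; rewrite !inE => /andP [ux mu].
    apply/forallP => w; apply/implyP; rewrite !inE => /andP [wx mw].
    apply/negP => euw.
    case: (u =P y) => [uy | uy].
      subst u; move/negP: nd; apply; apply/existsP; exists w; by rewrite mw wx.
    case: (w =P y) => [wy | wy].
      subst w; move/negP: nd; apply; apply/existsP; exists u.
      by rewrite mu ux e_sym.
    have nxy := ne_e exy; have nuw := ne_e euw.
    move/eqP: ux => ux; move/eqP: wx => wx.
    by apply: (F2i nF2 exy euw); le_tac.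
  move/hI; rewrite /degC (bigD1 x) /=; last by rewrite !inE eqxx.
  rewrite big1 ?addn0 // => i /andP [iI ix]; rewrite !inE ix /= -leqNgt leqn0 in iI.
  exact/eqP.
case: (boolP [exists d, [&& (0 < m d)%N, d != a & e b d]]) =>
    [/existsP [d /and3P [md da ebd]] | nNb];
  case: (boolP [exists c, [&& (0 < m c)%N, c != b & e a c]]) =>
    [/existsP [c /and3P [mc cb eac]] | nNa].
- have ncd : c <> d.
    move=> cd; subst d; move/negP: nc; apply; apply/existsP; exists c.
    by rewrite eac ebd mc.
  have := ne_e eac; have := ne_e ebd; move/eqP: cb; move/eqP: da => ? ? ? ?.
  by exfalso; apply: (F2i nF2 eac ebd); le_tac.
- have := key b a; rewrite e_sym => /(_ eab mb ma nNa) hb.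
  have := ne_e ebd; move/eqP: da => ? ?.
  by exfalso; apply: (F2i nF2 (_ : e b a) ebd); [rewrite e_sym | le_tac].
- have ha := key a b eab ma mb nNb.
  have := ne_e eac; move/eqP: cb => ? ?.
  by exfalso; apply: (F2i nF2 eab eac); le_tac.
- have ha := key a b eab ma mb nNb.
  have := key b a; rewrite e_sym => /(_ eab mb ma nNa) hb.
  by exfalso; apply: (F2i nF2 eab eab); le_tac.
Qed.

End Comb.

Section Symb.
Variables (K : fieldType) (n : nat) (e : rel 'I_n).
Hypotheses (e_sym : ssrbool.symmetric e) (e_irr : irreflexive e).
Local Notation poly := {mpoly K[n]}.
Implicit Types (p q r : poly) (m : 'X_{1..n}) (C D : {set 'I_n}).
Local Notation F := (@F K n e).

Lemma degCD C m1 m2 : degC C (m1 + m2)%MM = (degC C m1 + degC C m2)%N.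
Proof. by rewrite /degC -big_split; apply: eq_bigr => i _; rewrite mnmDE. Qed.

Lemma degC_ge C m i : i \in C -> (m i <= degC C m)%N.
Proof. by move=> iC; rewrite /degC (bigD1 i) //= leq_addr. Qed.

Lemma degC_mono C D m : C \subset D -> (degC C m <= degC D m)%N.
Proof.
move=> /subsetP sCD; rewrite /degC !(big_mkcond (fun i => i \in _)).
apply: leq_sum => i _; case: ifP => // /sCD ->; exact: leqnn.
Qed.

Lemma degC_gt0 C m : (0 < degC C m)%N -> exists2 i, i \in C & (0 < m i)%N.
Proof.
move=> h; apply: NNPP => hno; move: h; rewrite /degC big1 // => i iC.
by apply/eqP; rewrite -leqn0 leqNgt; apply/negP => hi; apply: hno; exists i.
Qed.

Definition Pc (C : {set 'I_n}) : pset K n := mspan (fun m => (0 < degC C m)%N).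

Lemma Pc_up C : upclosed (fun m => (0 < degC C m)%N).
Proof. by move=> m1 m2 h; rewrite degCD; lia. Qed.

Lemma Pc_prime C : prime_ideal (Pc C).
Proof.
split; [split; [exact: mspan0 | split] | split].
- exact: mspanD.
- by move=> a r; apply: mspan_mull; apply: Pc_up.
- move=> h; have := h 0%MM; rewrite msupp1 inE eqxx => /(_ isT).
  by rewrite /degC big1 // => i _; rewrite mnm0E.
move=> a b hab; apply: NNPP => /not_or_and [na nb].
pose u := [pred m | (0 < degC C m)%N].
pose a1 := proj u a; pose a0 := proj (predC u) a.
pose b1 := proj u b; pose b0 := proj (predC u) b.
have ha : a = a1 + a0 := proj_split u a.
have hb : b = b1 + b0 := proj_split u b.
have a0nz : a0 != 0.
  apply/negP => /eqP h0; apply: na; rewrite ha h0 addr0; exact: proj_span.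
have b0nz : b0 != 0.
  apply/negP => /eqP h0; apply: nb; rewrite hb h0 addr0; exact: proj_span.
have E : a0 * b0 = a * b - a1 * b - a0 * b1 by rewrite ha hb; ring.
have h1 : Pc C (a0 * b0).
  rewrite E; apply: mspanD; first apply: mspanD => //.
    by apply: mspanN; rewrite mulrC; apply: mspan_mull; [apply: Pc_up | apply: proj_span].
  by apply: mspanN; apply: mspan_mull; [apply: Pc_up | apply: proj_span].
have h2 : mspan (fun m => degC C m = 0%N) (a0 * b0).
  move=> m /msuppM_le /allpairsP [[m1 m2] /= [i1 i2 ->]].
  have h1' := proj_span i1; have h2' := proj_span i2; rewrite /= in h1' h2'.
  by rewrite degCD; lia.
have nz := mulf_neq0 a0nz b0nz.
have := h1 _ (mlead_supp nz); rewrite (h2 _ (mlead_supp nz)).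
by [].
Qed.

Lemma maxJ_nb J i : maxset (indep e) J -> i \notin J -> exists2 w, w \in J & e i w.
Proof.
move=> /maxsetP [iJ hmax] ni; apply: NNPP => hno.
have : indep e (i |: J).
  apply/forallP => x; apply/implyP; rewrite !inE => hx.
  apply/forallP => y; apply/implyP; rewrite !inE => hy.
  case/orP: hx => [/eqP -> | xJ]; case/orP: hy => [/eqP -> | yJ].
  - by rewrite e_irr.
  - by apply/negP => eiy; apply: hno; exists y.
  - by rewrite e_sym; apply/negP => eiy; apply: hno; exists x.
  - by have /forallP /(_ x) /implyP /(_ xJ) /forallP /(_ y) /implyP /(_ yJ) := iJ.
move=> /hmax /(_ (subsetUr _ _)) hJ.
by move: ni; rewrite -hJ setU11.
Qed.

Lemma PJ_ass J : maxset (indep e) J -> Ass F (Pc (~: J)).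
Proof.
move=> mJ; split; first exact: Pc_prime.
have iJ := maxsetp mJ.
exists 'X_[mT J] => g; split.
  move=> hg; apply/FE.
  apply: (mspanM hg (mspanX (u := fun m => m = mT J) erefl)) => m1 _ h1 ->.
  have [i iJ' mi] := degC_gt0 h1; rewrite in_setC in iJ'.
  have [w wJ eiw] := maxJ_nb mJ iJ'.
  apply/existsP; exists i; apply/existsP; exists w; rewrite eiw /=.
  apply/mnm_lepP => v; rewrite mnmDE emE mnmE.
  case: eqP => [iv|iv]; case: eqP => [wv|wv]; subst => //=.
  - by rewrite wJ in iJ'.
  - lia.
  - rewrite wJ; lia.
move=> /FE hF m hm.
have : (mT J + m)%MM \in msupp (g * 'X_[mT J]).
  by rewrite mcoeff_msupp mcoeffMX -mcoeff_msupp.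
move/hF => /existsP [i /existsP [j /andP [eij hle]]].
have gen (x y : 'I_n) : (em x y <= mT J + m)%MM -> x \notin J ->
    (0 < degC (~: J) m)%N.
  move=> /mnm_lepP /(_ x); rewrite mnmDE emE mnmE eqxx => hx xJ.
  have xJc : x \in ~: J by rewrite in_setC.
  have := degC_ge m xJc; rewrite (negbTE xJ) /= in hx.
  by move=> h; lia.
case: (boolP (i \in J)) => iJ'; last exact: gen i j hle iJ'.
apply: (gen j i); first by rewrite /em addmC.
apply/negP => jJ'.
have /forallP /(_ i) /implyP /(_ iJ') /forallP /(_ j) /implyP /(_ jJ') := iJ.
by rewrite eij.
Qed.

Lemma sqPc C p : ideal_sq (Pc C) p -> mspan (fun m => (1 < degC C m)%N) p.
Proof.
apply: ideal_gen_sub; [exact: mspan0 | exact: mspanD |].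
move=> c g _ [a [b [ha [hb ->]]]].
apply: mspan_mull; first by move=> m1 m2 h; rewrite degCD; lia.
apply: (mspanM ha hb) => m1 m2 h1 h2; rewrite degCD; lia.
Qed.

Lemma FsubAss P : Ass F P -> forall g, F g -> P g.
Proof.
move=> [_ [f hf]] g hg; apply/hf; apply/FE; rewrite mulrC.
apply: mspan_mull; [exact: F1_up | exact/FE].
Qed.

Lemma em_le_mT (T : {set 'I_n}) (u v : 'I_n) : u \in T -> v \in T -> u != v -> (em u v <= mT T)%MM.
Proof.
move=> uT vT uv; apply/mnm_lepP => w; rewrite emE mnmE.
case: eqP => [uw|uw]; case: eqP => [vw|vw]; subst => //=.
- by rewrite eqxx in uv.
- by rewrite uT.
- by rewrite vT.
Qed.

Theorem symbE p : symb2 F p <-> mspan (U2 e) p.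
Proof.
split.
  move=> hs m hm; apply/orP; case: (boolP (F2 e m)) => [h|nF2]; [by left | right].
  apply: (comb e_sym e_irr nF2) => I hI.
  have [J mJ sIJ] := maxset_exists hI.
  have := sqPc (hs _ (PJ_ass mJ)) hm => h2.
  by apply: leq_trans h2 (degC_mono _ _); rewrite setCS.
move=> hp P hP; apply: span_closed.
- exact: ideal_gen0.
- exact: ideal_genD.
- by move=> c a; apply: ideal_genZ.
have hsub := FsubAss hP.
have [[_ [_ _]] [_ Pprime]] := hP.1.
move=> m /hp /orP [].
  move=> /existsP [i /existsP [j /existsP [k /existsP [l /and3P [eij ekl h]]]]].
  rewrite (Xsplit _ h) mpolyXD; apply: ideal_gen1 => //.
  exists 'X_[em i j], 'X_[em k l]; split; first by apply: hsub; apply: XinF.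
  by split; [apply: hsub; apply: XinF|].
move=> /existsP [T /andP [/andP [cT /forallP tri] hle]].
have eT (x y : 'I_n) : x \in T -> y \in T -> x != y -> e x y.
  move=> xT yT xy; have /implyP /(_ xT) /forallP /(_ y) /implyP /(_ yT) /implyP := tri x.
  by apply.
have pair (u v : 'I_n) : P 'X_u -> P 'X_v -> u \in T -> v \in T -> u != v ->
    ideal_sq P 'X_[m].
  move=> pu pv uT vT uv.
  have hl : (em u v <= m)%MM := lepm_trans (em_le_mT uT vT uv) hle.
  rewrite (Xsplit _ hl) -XX; apply: ideal_gen1 => //.
  by exists 'X_u, 'X_v.
have pXY (x y : 'I_n) : x \in T -> y \in T -> x != y -> P 'X_x \/ P 'X_y.
  move=> xT yT xy; apply: Pprime; rewrite XX; apply: hsub; apply: XinF.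
  exact: eT.
have : (2 < #|T|)%N by rewrite (eqP cT).
move=> /card_gt2P [x [y [z [[xT yT zT] [xy yz zx]]]]].
case: (pXY x y xT yT xy) => [px | py].
  case: (pXY y z yT zT yz) => [py | pz].
    exact: (pair x y).
  by apply: (pair x z) => //; rewrite eq_sym.
case: (pXY x z xT zT _) => [|px|pz]; first by rewrite eq_sym.
  exact: (pair x y).
exact: (pair y z).
Qed.

End Symb.

Section Count.
Variables (n : nat) (e : rel 'I_n).
Hypotheses (e_sym : ssrbool.symmetric e) (e_irr : irreflexive e).
Implicit Types (m : 'X_{1..n}) (T : {set 'I_n}).
Local Notation NT T := (closed_nbhd e T).

Lemma tri3 T : is_triangle e T -> exists x y z,
  [/\ x <> y, y <> z & x <> z] /\ [/\ e x y, e y z & e x z] /\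
  (forall t, t \in T = [|| t == x, t == y | t == z]).
Proof.
move=> /andP [cT /forallP tri].
have eT (x y : 'I_n) : x \in T -> y \in T -> x != y -> e x y.
  move=> xT yT xy; have /implyP /(_ xT) /forallP /(_ y) /implyP /(_ yT) /implyP := tri x.
  by apply.
have : (2 < #|T|)%N by rewrite (eqP cT).
move=> /card_gt2P [x [y [z [[xT yT zT] [xy yz zx]]]]].
exists x, y, z; split; first by split; apply/eqP => //; rewrite eq_sym.
split; first by split; apply: eT => //; rewrite eq_sym.
have sub : [set x; y; z] \subset T.
  by apply/subsetP => t; rewrite !inE => /orP [/orP [] |] /eqP ->.
have c3 : #|[set x; y; z]| = 3%N.
  have -> : [set x; y; z] = x |: (y |: [set z]) by apply/setP => t; rewrite !inE ?orbA.
  rewrite !cardsU1 cards1 !inE (negbTE xy) (negbTE yz) eq_sym (negbTE zx) //.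
have : [set x; y; z] == T by rewrite eqEcard sub c3 (eqP cT).
by move=> /eqP <- t; rewrite !inE orbA.
Qed.

Lemma mT_le T m t : (mT T <= m)%MM -> t \in T -> (0 < m t)%N.
Proof. by move=> /mnm_lepP /(_ t); rewrite mnmE => h tT; rewrite tT in h. Qed.

Lemma T_NT T t : t \in T -> t \in NT T.
Proof. by move=> tT; rewrite inE; apply/existsP; exists t; rewrite tT eqxx. Qed.

Lemma K0 m T v u : ~~ F2 e m -> is_triangle e T -> (mT T <= m)%MM ->
  v \notin T -> (0 < m v)%N -> e v u -> (0 < m u)%N -> False.
Proof.
move=> nF2 tT hle vT mv evu mu.
have [x [y [z [[xy yz xz] [[exy eyz exz] hT]]]]] := tri3 tT.
have mx : (0 < m x)%N by apply: mT_le hle _; rewrite hT eqxx.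
have my : (0 < m y)%N by apply: mT_le hle _; rewrite hT eqxx orbT.
have mz : (0 < m z)%N by apply: mT_le hle _; rewrite hT eqxx !orbT.
have vu := ne_e e_irr evu.
move: vT; rewrite hT => /norP [/eqP vx /norP [/eqP vy /eqP vz]].
case: (boolP (u \in T)); rewrite hT.
  case/orP => [|/orP []] /eqP ?; subst u.
  - by apply: (F2i nF2 evu eyz); le_tac.
  - by apply: (F2i nF2 evu exz); le_tac.
  - by apply: (F2i nF2 evu exy); le_tac.
move=> /norP [/eqP ux /norP [/eqP uy /eqP uz]].
by apply: (F2i nF2 evu exy); le_tac.
Qed.

Lemma K1 m T v : ~~ F2 e m -> is_triangle e T -> (mT T <= m)%MM ->
  v \in T -> (m v <= 1)%N.
Proof.
move=> nF2 tT hle; have [x [y [z [[xy yz xz] [[exy eyz exz] hT]]]]] := tri3 tT.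
have mx : (0 < m x)%N by apply: mT_le hle _; rewrite hT eqxx.
have my : (0 < m y)%N by apply: mT_le hle _; rewrite hT eqxx orbT.
have mz : (0 < m z)%N by apply: mT_le hle _; rewrite hT eqxx !orbT.
rewrite hT leqNgt => /orP [|/orP []] /eqP -> ; apply/negP => h.
- by apply: (F2i nF2 exy exz); le_tac.
- by apply: (F2i nF2 (_ : e y x) eyz); [rewrite e_sym | le_tac].
- by apply: (F2i nF2 (_ : e z x) (_ : e z y)); [rewrite e_sym | rewrite e_sym | le_tac].
Qed.

Lemma L3 m T T' : ~~ F2 e m -> is_triangle e T -> is_triangle e T' ->
  (mT T <= m)%MM -> (mT T' <= m)%MM -> T' = T.
Proof.
move=> nF2 tT tT' h h'.
have sub : T' \subset T.
  apply/subsetP => v vT'; apply/negPn/negP => vT.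
  have [x [y [z [[xy yz xz] [[exy eyz exz] hT']]]]] := tri3 tT'.
  have mv := mT_le h' vT'.
  have hx : x \in T' by rewrite hT' eqxx.
  have hy : y \in T' by rewrite hT' eqxx orbT.
  have hz : z \in T' by rewrite hT' eqxx !orbT.
  move: vT'; rewrite hT' => /orP [|/orP []] /eqP ?; subst v.
  - exact: (K0 nF2 tT h vT mv exy (mT_le h' hy)).
  - by apply: (K0 nF2 tT h vT mv (_ : e y x) (mT_le h' hx)); rewrite e_sym.
  - by apply: (K0 nF2 tT h vT mv (_ : e z x) (mT_le h' hx)); rewrite e_sym.
apply/eqP; rewrite eqEcard sub.
by move: tT tT' => /andP [/eqP -> _] /andP [/eqP -> _].
Qed.

Lemma L4a m T : ~~ F2 e m -> is_triangle e T -> (mT T <= m)%MM ->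
  STm e T (m - mT T)%MM.
Proof.
move=> nF2 tT hle; apply/forallP => i; apply/implyP => iN.
rewrite mnmBE mnmE; case: (boolP (i \in T)) => iT /=.
  by have := K1 nF2 tT hle iT; rewrite subn_eq0.
rewrite subn0; apply/negPn/negP; rewrite -lt0n => mi.
move: iN; rewrite inE => /existsP [t /andP [t0T /orP [/eqP it | eit]]].
  by subst t; rewrite t0T in iT.
exact: (K0 nF2 tT hle iT mi eit (mT_le hle t0T)).
Qed.

Lemma L4b m T : ~~ F2 e m -> is_triangle e T -> (mT T <= m)%MM ->
  ~~ ITm e T (m - mT T)%MM.
Proof.
move=> nF2 tT hle; apply/negP => /andP [_ /existsP [i /existsP [j /and4P [iN jN eij h]]]].
have iT : i \notin T by apply: contra iN; apply: T_NT.
have pos (x : 'I_n) : (1 <= (em i j) x)%N -> (0 < m x)%N.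
  move=> hx; move/mnm_lepP: h => /(_ x); rewrite mnmBE => h2.
  have : (0 < m x - mT T x)%N by apply: leq_trans h2.
  by rewrite subn_gt0 => /(leq_trans _); apply.
apply: (K0 nF2 tT hle iT _ eij); apply: pos; rewrite emE eqxx //.
by rewrite addn1.
Qed.

Lemma degC_U C (i : 'I_n) : degC C (U_(i))%MM = (i \in C).
Proof.
rewrite /degC; case: (boolP (i \in C)) => iC.
  rewrite (bigD1 i) //= mnm1E eqxx big1 // => j /andP [_ ji].
  by rewrite mnm1E eq_sym (negbTE ji).
by rewrite big1 // => j jC; rewrite mnm1E; case: eqP => // ij; subst; rewrite jC in iC.
Qed.

Lemma degC_mT T : degC T (mT T) = #|T|.
Proof.
by rewrite /degC -sum1_card; apply: eq_bigr => i iT; rewrite mnmE iT.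
Qed.

Lemma degC_le C m1 m2 : (m1 <= m2)%MM -> (degC C m1 <= degC C m2)%N.
Proof. by move=> /mnm_lepP h; apply: leq_sum => i _. Qed.

Lemma L5 m T : is_triangle e T -> STm e T m -> ~~ ITm e T m ->
  ~~ F2 e (m + mT T)%MM.
Proof.
move=> tT hS nI.
have m0 (t : 'I_n) : t \in NT T -> m t = 0%N.
  by move=> tN; have /forallP /(_ t) /implyP /(_ tN) /eqP := hS.
have inT (i j : 'I_n) : e i j -> (em i j <= m + mT T)%MM -> i \in T.
  move=> eij h; apply/negPn/negP => iT.
  have := h; move/mnm_lepP => /(_ i); rewrite mnmDE emE mnmE (negbTE iT) addn0 eqxx.
  move=> mi.
  have iN : i \notin NT T.
    apply/negP => /m0 mi0; rewrite mi0 in mi; lia.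
  have jT : j \notin T.
    apply/negP => jT; move/negP: iN; apply; rewrite inE; apply/existsP; exists j.
    by rewrite jT eij orbT.
  have := h; move/mnm_lepP => /(_ j); rewrite mnmDE emE mnmE (negbTE jT) addn0 eqxx.
  move=> mj.
  have jN : j \notin NT T.
    apply/negP => /m0 mj0; rewrite mj0 in mj; lia.
  move/negP: nI; apply; rewrite /ITm hS /=; apply/existsP; exists i; apply/existsP; exists j.
  rewrite iN jN eij /=; have ij := ne_e e_irr eij.
  apply/mnm_lepP => v; rewrite emE.
  case: eqP => [iv|iv]; case: eqP => [jv|jv]; subst => //=; lia.
apply/negP => /existsP [i /existsP [j /existsP [k /existsP [l /and3P [eij ekl h]]]]].
have hij : (em i j <= m + mT T)%MM by apply: lepm_trans h; apply: lem_addr.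
have hkl : (em k l <= m + mT T)%MM by apply: lepm_trans h; apply: lem_addl.
have hji : (em j i <= m + mT T)%MM by rewrite /em addmC.
have hlk : (em l k <= m + mT T)%MM by rewrite /em addmC.
have eji : e j i by rewrite e_sym.
have elk : e l k by rewrite e_sym.
have iT := inT _ _ eij hij; have jT := inT _ _ eji hji.
have kT := inT _ _ ekl hkl; have lT := inT _ _ elk hlk.
have := degC_le T h; rewrite !degCD !degC_U degC_mT iT kT jT lT.
rewrite /degC big1 ?add0n; last by move=> t t0T; apply: m0; apply: T_NT.
by move: tT => /andP [/eqP -> _].
Qed.

End Count.

Section Final.
Variables (n : nat) (e : rel 'I_n).
Hypotheses (e_sym : ssrbool.symmetric e) (e_irr : irreflexive e).
Implicit Types (m : 'X_{1..n}) (T : {set 'I_n}).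

Lemma mdeg_le m1 m2 : (m1 <= m2)%MM -> (mdeg m1 <= mdeg m2)%N.
Proof. by move=> h; rewrite -(submK h) mdegD leq_addl. Qed.

Lemma mdeg_mT T : is_triangle e T -> mdeg (mT T) = 3%N.
Proof.
move=> /andP [/eqP cT _]; rewrite mdegE -cT -sum1_card [RHS]big_mkcond /=.
by apply: eq_bigr => i _; rewrite mnmE; case: (i \in T).
Qed.

Lemma count_eq (z : int) :
  cnt (U2 e) (F2 e) z =
  (\sum_(T | is_triangle e T) cnt (STm e T) (ITm e T) (z - 3))%N.
Proof.
case: (boolP (z < 3)) => [lt3 | ge3].
  have [k hk] : exists k, z - 3 = Negz k.
    case h: (z - 3) => [d|k]; last by exists k.
    exfalso; move: lt3 h; lia.
  rewrite big1; last by move=> T _; rewrite hk.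
  case: z lt3 hk => [d|k'] //= lt3 _.
  apply: eq_card0 => b; rewrite !inE.
  apply/negP => /andP [/andP [/eqP db /orP [h | /existsP [T /andP [tT hle]]]] nF2].
    by rewrite h in nF2.
  have := mdeg_le hle; rewrite mdeg_mT // db; move: lt3; lia.
case: z ge3 => [d|k] ge3; last by exfalso; move: ge3; lia.
have d3 : (3 <= d)%N by move: ge3; lia.
have -> : Posz d - 3 = Posz (d - 3) by lia.
rewrite /cnt.
set d' := (d - 3)%N.
have step_a : #|[pred b : 'X_{1..n < d.+1} | (mdeg b == d) && U2 e b && ~~ F2 e b]| =
  (\sum_(T | is_triangle e T) #|[pred b : 'X_{1..n < d.+1} |
     [&& (mdeg b == d), U2 e b, ~~ F2 e b & (mT T <= b)%MM]]|)%N.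
  rewrite -sum1_card.
  transitivity (\sum_(b in [pred b : 'X_{1..n < d.+1} | (mdeg b == d) && U2 e b && ~~ F2 e b])
      \sum_(T | is_triangle e T) ((mT T <= b)%MM : nat))%N.
    apply: eq_bigr => b; rewrite inE => /andP [/andP [db u2] nF2].
    have [T0 t0 l0] : exists2 T0, is_triangle e T0 & (mT T0 <= b)%MM.
      case/orP: u2 => [h | /existsP [T0 /andP [t0 l0]]]; first by rewrite h in nF2.
      by exists T0.
    rewrite (bigD1 T0) //= l0 big1 // => T /andP [tT nT].
    apply/eqP; rewrite eqb0; apply/negP => lT.
    by have := L3 e_sym e_irr nF2 t0 tT l0 lT; move/eqP: nT.
  rewrite exchange_big; apply: eq_bigr => T tT.
  rewrite -sum1_card [RHS]big_mkcond [LHS]big_mkcond; apply: eq_bigr => b _.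
  rewrite !inE; case: (mdeg b == d); case: (U2 e b); case: (F2 e b);
    by case: (mT T <= b)%MM.
rewrite step_a; apply: eq_bigr => T tT.
pose f (b' : 'X_{1..n < d'.+1}) : 'X_{1..n < d.+1} := insubd bm0 (val b' + mT T)%MM.
have fE (b' : 'X_{1..n < d'.+1}) : mdeg b' = d' -> val (f b') = (val b' + mT T)%MM.
  move=> hb; rewrite val_insubd mdegD hb mdeg_mT // /d'.
  by have -> : (d - 3 + 3 < d.+1)%N by lia.
set S' := [pred b' : 'X_{1..n < d'.+1} | (mdeg b' == d') && STm e T b' && ~~ ITm e T b'].
have inj : {in S' &, injective f}.
  move=> x y; rewrite !inE => /andP [/andP [/eqP hx _] _] /andP [/andP [/eqP hy _] _] hxy.
  apply: val_inj; apply: (@addIm _ (mT T)); rewrite -fE // -fE //; by rewrite hxy.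
rewrite -(card_in_imset inj); apply: eq_card => b.
apply/idP/idP.
  rewrite inE.
  move=> /and4P [/eqP db u2 nF2 hle].
  have db' : mdeg (val b - mT T)%MM = d'.
    by have := mdegD (val b - mT T)%MM (mT T); rewrite submK // mdeg_mT // db /d'; lia.
  have dlt : (mdeg (val b - mT T)%MM < d'.+1)%N by rewrite db'.
  pose b' : 'X_{1..n < d'.+1} := BMultinom dlt.
  apply/imsetP; exists b'.
    rewrite inE /= db' eqxx /= (L4a e_sym e_irr nF2 tT hle) /=.
    exact: (L4b e_irr nF2 tT hle).
  by apply: val_inj; rewrite fE //= submK.
move=> /imsetP [b' hb' ->]; move: hb'; rewrite inE => /andP [/andP [/eqP db hS] nI]; rewrite inE.
rewrite fE // mdegD db mdeg_mT // /d' subnK // eqxx /=.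
rewrite (L5 e_sym e_irr tT hS nI) lem_addl !andbT.
by apply/orP; right; apply/existsP; exists T; rewrite tT lem_addl.
Qed.

End Final.

Theorem corollary6p9 (K : fieldType) (n : nat) (e : rel 'I_n)
  (e_sym : ssrbool.symmetric e) (e_irr : irreflexive e) (z : int) :
  hilb (symb2 (@edge_ideal K n e)) (ideal_sq (@edge_ideal K n e)) z =
  (\sum_(T : {set 'I_n} | is_triangle e T)
     hilb (@S_T K n e T) (@I_T K n e T) (z - 3))%N.
Proof.
rewrite (@hilb_span _ _ _ _ (U2 e) (F2 e)); first last.
- exact: F2E.
- exact: symbE.
rewrite count_eq //; apply: eq_bigr => T _; symmetry.
by apply: hilb_span; [exact: STE | exact: ITE].
Qed.
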